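(* Fix a program in the first-order functional language described in the context. For every expression $\pi{:}e$ of the program and every slicing criterion $\sigma$, $$L(G_\pi^\sigma)=L(G_\pi^{\{\epsilon\}})\,\sigma,$$ where $G_\pi^\sigma$ is the context-free demand grammar for program point $\pi$ under slicing criterion $\sigma$, and juxtaposition denotes concatenation of languages.
   Context: Programs. A program consists of first-order function definitions $(\mathtt{define}\ (f\ z_1\ \dots\ z_n)\ e_f)$ and a main expression $e_{\mathrm{main}}$, which is treated as the body of a parameterless function $\mathrm{main}$. Programs are in administrative normal form and all variable names are distinct. The grammar is $e ::= (\mathtt{if}\ x\ e_1\ e_2) \mid (\mathtt{let}\ x \leftarrow s\ \mathtt{in}\ e) \mid (\mathtt{return}\ x)$, $s ::= k \mid \mathtt{nil} \mid (\mathtt{cons}\ x_1\ x_2) \mid (\mathtt{car}\ x) \mid (\mathtt{cdr}\ x) \mid (\mathtt{null?}\ x) \mid (+\ x_1\ x_2) \mid (f\ x_1 \dots x_n)$. Every expression, every application and every variable occurrence carries a distinct label (program point) $\pi$, written $\pi{:}e$. Demands. Let $\Sigma=\{0,1,\bar 0,\bar 1,2\}$. A demand is a set of strings over $\Sigma$. For sets we write $\sigma_1\sigma_2=\{\alpha\beta\mid\alpha\in\sigma_1,\beta\in\sigma_2\}$ and $a\sigma=\{a\alpha\mid\alpha\in\sigma\}$. A slicing criterion is a prefix-closed set of strings over $\{0,1\}$, given by a regular grammar. Demand analysis. Maps from program points to demands are combined by pointwise union. For an application $\pi{:}s$ and a demand $\sigma$, $\mathcal A(s,\sigma)$ is: -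 for a constant $k$ or $\mathtt{nil}$: $\{\pi\mapsto\sigma\}$; - for $(\mathtt{null?}\ \pi_1{:}x)$: $\{\pi_1\mapsto 2\sigma,\ \pi\mapsto\sigma\}$; - for $(+\ \pi_1{:}x\ \pi_2{:}y)$: $\{\pi_1\mapsto 2\sigma,\ \pi_2\mapsto 2\sigma,\ \pi\mapsto\sigma\}$; - for $(\mathtt{car}\ \pi_1{:}x)$: $\{\pi_1\mapsto 2\sigma\cup 0\sigma,\ \pi\mapsto\sigma\}$; - for $(\mathtt{cdr}\ \pi_1{:}x)$: $\{\pi_1\mapsto 2\sigma\cup1\sigma,\ \pi\mapsto\sigma\}$; - for $(\mathtt{cons}\ \pi_1{:}x\ \pi_2{:}y)$: $\{\pi_1\mapsto\bar0\sigma,\ \pi_2\mapsto\bar1\sigma,\ \pi\mapsto\sigma\}$; - for $(f\ \pi_1{:}y_1\dots\pi_n{:}y_n)$: $\{\pi_i\mapsto L_f^i\sigma,\ \pi\mapsto\sigma\}$. For expressions, $\mathcal D$ is: - $\mathcal D(\pi{:}(\mathtt{return}\ \pi_1{:}x),\sigma)=\{\pi_1\mapsto\sigma,\pi\mapsto\sigma\}$; - $\mathcal D(\pi{:}(\mathtt{if}\ \pi_1{:}x\ e_1\ e_2),\sigma)=\mathcal D(e_1,\sigma)\cup\mathcal D(e_2,\sigma)\cup\{\pi_1\mapsto 2\sigma,\pi\mapsto\sigma\}$; - $\mathcal D(\pi{:}(\mathtt{let}\ x\leftarrow s\ \mathtt{in}\ e),\sigma)=\mathcal A(s,\bigcup_{\pi'}DE(\pi'))\cup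 DE\cup\{\pi\mapsto\sigma\}$, where $DE=\mathcal D(e,\sigma)$ and $\pi'$ ranges over the occurrences of $x$ in $e$. Function summaries. $L_f^i\subseteq\Sigma^*$ is required to satisfy, for every $\sigma$, that $L_f^i\sigma$ equals the union of $\mathcal D(e_f,\sigma)(\pi')$ over the occurrences $\pi'$ of $z_i$ in $e_f$; these requirements are computed with a symbolic placeholder for $\sigma$. The concrete demand on a function is $\sigma_{\mathrm{main}}=$ the slicing criterion, and for other $f$, $\sigma_f$ is the union of the demands on all call-site applications of $f$. The demand $D_\pi$ at a program point $\pi$ in the body of $f$ is $\mathcal D(e_f,\sigma_f)(\pi)$. All these equations, with one nonterminal for each $L_f^i$, each $\sigma_f$ and each $D_\pi$, and with $\sigma_{\mathrm{main}}$ producing the strings of the slicing criterion, form a context-free grammar over $\Sigma$ whose least solution defines these sets. $G_\pi^\sigma$ is this grammar with start symbol $D_\pi$ when the slicing criterion is $\sigma$, and $L(G_\pi^\sigma)$ is its language. The same construction is used for any set $\sigma$ of strings over $\{0,1\}$ in place of the criterion. *)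

(* Defs.v *)
From Stdlib Require List.
From mathcomp Require Import all_boot.
Set Implicit Arguments. Unset Strict Implicit. Unset Printing Implicit Defensive.

Inductive sym := S0 | S1 | S0b | S1b | S2.

Definition lang := seq sym -> Prop.

Definition lempty : lang := fun _ => False.
Definition leps : lang := fun w => w = [::].
Definition lunion (A B : lang) : lang := fun w => A w \/ B w.
Definition lpre (a : sym) (A : lang) : lang := fun w => exists v, w = a :: v /\ A v.
Definition lcat (A B : lang) : lang := fun w => exists u v, w = u ++ v /\ A u /\ B v.
Definition lsub (A B : lang) : Prop := forall w, A w -> B w.

Record vocc := VO { vlab : nat; vname : nat }.

(* applications s (their label is stored in the enclosing let) *)
Inductive app :=
 | AConst (k : nat)
 | ANil
 | ACons (x y : vocc)
 | ACar (x : vocc)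
 | ACdr (x : vocc)
 | ANull (x : vocc)
 | APlus (x y : vocc)
 | ACall (f : nat) (args : seq vocc).

(* expressions; ELet lab x slab s e is  lab:(let x <- slab:s in e) *)
Inductive expr :=
 | EIf (lab : nat) (x : vocc) (e1 e2 : expr)
 | ELet (lab : nat) (x : nat) (slab : nat) (s : app) (e : expr)
 | EReturn (lab : nat) (x : vocc).

Record fundef := FunDef { fname : nat; fparams : seq nat; fbody : expr }.
Record program := Program { pdefs : seq fundef; pmain : expr }.

(* all bodies, with the function they belong to (None = main) *)
Definition bodies (P : program) : seq (option nat * expr) :=
  (None, pmain P) :: [seq (Some (fname d), fbody d) | d <- pdefs P].

Definition app_vars (s : app) : seq vocc :=
  match s with
  | ACons a b | APlus a b => [:: a; b]
  | ACar a | ACdr a | ANull a => [:: a]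
  | ACall _ args => args
  | _ => [::]
  end.

Definition app_occs (x : nat) (s : app) : seq nat :=
  [seq vlab y | y <- app_vars s & vname y == x].

Fixpoint occs (x : nat) (e : expr) : seq nat :=
  match e with
  | EIf _ y e1 e2 => (if vname y == x then [:: vlab y] else [::]) ++ occs x e1 ++ occs x e2
  | ELet _ _ _ s e' => app_occs x s ++ occs x e'
  | EReturn _ y => if vname y == x then [:: vlab y] else [::]
  end.

(* call sites (called function, label of the application) *)
Fixpoint calls (e : expr) : seq (nat * nat) :=
  match e with
  | EIf _ _ e1 e2 => calls e1 ++ calls e2
  | ELet _ _ sl s e' => (if s is ACall f _ then [:: (f, sl)] else [::]) ++ calls e'
  | EReturn _ _ => [::]
  end.

Fixpoint all_labels (e : expr) : seq nat :=
  match e with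
  | EIf l y e1 e2 => l :: vlab y :: all_labels e1 ++ all_labels e2
  | ELet l _ sl s e' => l :: sl :: [seq vlab y | y <- app_vars s] ++ all_labels e'
  | EReturn l y => [:: l; vlab y]
  end.

Fixpoint expr_labels (e : expr) : seq nat :=
  match e with
  | EIf l _ e1 e2 => l :: expr_labels e1 ++ expr_labels e2
  | ELet l _ _ _ e' => l :: expr_labels e'
  | EReturn l _ => [:: l]
  end.

Fixpoint binders (e : expr) : seq nat :=
  match e with
  | EIf _ _ e1 e2 => binders e1 ++ binders e2
  | ELet _ x _ _ e' => x :: binders e'
  | EReturn _ _ => [::]
  end.

Definition prog_expr_labels (P : program) : seq nat :=
  flatten [seq expr_labels b.2 | b <- bodies P].

Definition wf_program (P : program) : Prop :=
  [/\ uniq (flatten [seq all_labels b.2 | b <- bodies P]),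
      uniq (flatten [seq fparams d ++ binders (fbody d) | d <- pdefs P]
              ++ binders (pmain P)) &
      uniq [seq fname d | d <- pdefs P]].

Definition dmap := nat -> lang.
Definition dempty : dmap := fun _ => lempty.
Definition dsingle (p : nat) (A : lang) : dmap := fun q w => q = p /\ A w.
Definition dunion (M N : dmap) : dmap := fun q => lunion (M q) (N q).

(* nonterminals of the demand grammar: L_f^i (i 0-based), sigma_f
   (None = main), D_pi *)
Inductive nonterm := NL (f i : nat) | NSig (g : option nat) | ND (p : nat).
Definition valuation := nonterm -> lang.

Fixpoint dargs (rho : valuation) (f i : nat) (args : seq vocc) (sg : lang) : dmap :=
  match args with
  | [::] => dempty
  | y :: ys => dunion (dsingle (vlab y) (lcat (rho (NL f i)) sg)) (dargs rho f i.+1 ys sg)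
  end.

Definition Aapp (rho : valuation) (pi : nat) (s : app) (sg : lang) : dmap :=
  dunion (dsingle pi sg)
  match s with
  | AConst _ | ANil => dempty
  | ANull y => dsingle (vlab y) (lpre S2 sg)
  | APlus y z => dunion (dsingle (vlab y) (lpre S2 sg)) (dsingle (vlab z) (lpre S2 sg))
  | ACar y => dsingle (vlab y) (lunion (lpre S2 sg) (lpre S0 sg))
  | ACdr y => dsingle (vlab y) (lunion (lpre S2 sg) (lpre S1 sg))
  | ACons y z => dunion (dsingle (vlab y) (lpre S0b sg)) (dsingle (vlab z) (lpre S1b sg))
  | ACall f args => dargs rho f 0 args sg
  end.

Definition occ_union (x : nat) (e : expr) (DE : dmap) : lang :=
  fun w => exists2 p, p \in occs x e & DE p w.

Fixpoint Dex (rho : valuation) (e : expr) (sg : lang) : dmap :=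
  match e with
  | EReturn pi y => dunion (dsingle (vlab y) sg) (dsingle pi sg)
  | EIf pi y e1 e2 =>
      dunion (dunion (Dex rho e1 sg) (Dex rho e2 sg))
             (dunion (dsingle (vlab y) (lpre S2 sg)) (dsingle pi sg))
  | ELet pi x sl s e' =>
      let DE := Dex rho e' sg in
      dunion (Aapp rho sl s (occ_union x e' DE)) (dunion DE (dsingle pi sg))
  end.

(* The equations for L_f^i are those computed with a symbolic placeholder for
   sigma, the placeholder being instantiated by {epsilon}. *)
Definition is_solution (P : program) (crit : lang) (rho : valuation) : Prop :=
  [/\ (forall d, List.In d (pdefs P) -> forall i, i < size (fparams d) ->
        forall p, p \in occs (nth 0 (fparams d) i) (fbody d) ->
          lsub (Dex rho (fbody d) leps p) (rho (NL (fname d) i))),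
      lsub crit (rho (NSig None)),
      (forall g e, List.In (g, e) (bodies P) -> forall f sl, (f, sl) \in calls e ->
          lsub (rho (ND sl)) (rho (NSig (Some f)))) &
      (forall g e, List.In (g, e) (bodies P) -> forall p,
          lsub (Dex rho e (rho (NSig g)) p) (rho (ND p)))].

(* least solution = language L(G_n^crit) of the grammar with start symbol n *)
Definition Lsol (P : program) (crit : lang) (n : nonterm) : lang :=
  fun w => forall rho, is_solution P crit rho -> rho n w.

Definition is01 (a : sym) : bool := if a is S0 then true else if a is S1 then true else false.

Definition is_regular (A : lang) : Prop :=
  exists (Q : finType) (q0 : Q) (delta : Q -> sym -> Q) (acc : pred Q),
    forall w, A w <-> acc (foldl delta q0 w).

Definition slicing_criterion (A : lang) : Prop :=
  [/\ forall w, A w -> all is01 w,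
      forall u v, A (u ++ v) -> A u &
      is_regular A].

(* Main.v *)
Require Import Defs.
From mathcomp Require Import all_boot.
Set Implicit Arguments. Unset Strict Implicit.

Definition NLsub (r1 r2 : valuation) := forall f i, lsub (r1 (NL f i)) (r2 (NL f i)).

Lemma NLsub_refl r : NLsub r r.
Proof. by move=> f i w. Qed.

Lemma lcat_assocL (L A B : lang) w : lcat L (lcat A B) w -> lcat (lcat L A) B w.
Proof.
move=> [u [v [-> [Hu [a [b [-> [Ha Hb]]]]]]]].
exists (u ++ a), b; rewrite catA; split => //; split => //; by exists u, a.
Qed.

Lemma lcat_assocR (L A B : lang) w : lcat (lcat L A) B w -> lcat L (lcat A B) w.
Proof.
move=> [u [v [-> [[a [b [-> [Ha Hb]]]] Hv]]]].
exists a, (b ++ v); rewrite -catA; split => //; split => //; by exists b, v.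
Qed.

Lemma lpre_catL a (A B : lang) w : lpre a (lcat A B) w -> lcat (lpre a A) B w.
Proof.
move=> [x [-> [u [v [-> [Hu Hv]]]]]].
exists (a :: u), v; split => //; split => //; by exists u.
Qed.

Lemma lpre_catR a (A B : lang) w : lcat (lpre a A) B w -> lpre a (lcat A B) w.
Proof.
move=> [u [v [-> [[x [-> Hx]] Hv]]]].
exists (x ++ v); split => //; by exists x, v.
Qed.

Lemma lcat_mono (A1 A2 B1 B2 : lang) : lsub A1 A2 -> lsub B1 B2 -> lsub (lcat A1 B1) (lcat A2 B2).
Proof. move=> H1 H2 w [u [v [-> [Hu Hv]]]]; exists u, v; auto. Qed.

Lemma lpre_mono a (A1 A2 : lang) : lsub A1 A2 -> lsub (lpre a A1) (lpre a A2).
Proof. move=> H w [x [-> Hx]]; exists x; auto. Qed.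

Lemma dargs_mono r1 r2 s1 s2 : NLsub r1 r2 -> lsub s1 s2 ->
  forall args f i q, lsub (dargs r1 f i args s1 q) (dargs r2 f i args s2 q).
Proof.
move=> Hr Hs; elim=> [|y ys IH] f i q w /=; first by [].
case=> [[-> H]|H]; [left; split => //; exact: (lcat_mono (Hr f i) Hs H)| right; exact: IH].
Qed.

Lemma dargs_catL r A B : forall args f i q w,
  dargs r f i args (lcat A B) q w -> lcat (dargs r f i args A q) B w.
Proof.
elim=> [|y ys IH] f i q w /=; first by [].
case=> [[-> H]|H].
  have [u [v [-> [Hu Hv]]]] := lcat_assocL H.
  by exists u, v; split => //; split => //; left.
have [u [v [-> [Hu Hv]]]] := IH _ _ _ _ H.
by exists u, v; split => //; split => //; right.
Qed.

Lemma dargs_catR r A B : forall args f i q w,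
  lcat (dargs r f i args A q) B w -> dargs r f i args (lcat A B) q w.
Proof.
elim=> [|y ys IH] f i q w /=; first by case=> [u [v [_ [[] _]]]].
case=> [u [v [-> [[[-> Hu]|Hu] Hv]]]].
  left; split => //; apply: lcat_assocR; by exists u, v.
right; apply: IH; by exists u, v.
Qed.

Ltac solvecat :=
  repeat match goal with
  | H : _ \/ _ |- _ => destruct H
  | H : _ /\ _ |- _ => destruct H
  | H : ?q = _ |- _ => subst q
  end.

Lemma Aapp_mono r1 r2 s1 s2 pi s : NLsub r1 r2 -> lsub s1 s2 ->
  forall q, lsub (Aapp r1 pi s s1 q) (Aapp r2 pi s s2 q).
Proof.
move=> Hr Hs q w [[-> H]|H]; first by left; split => //; apply: Hs.
have Hp : forall a, lsub (lpre a s1) (lpre a s2) := fun a => @lpre_mono a s1 s2 Hs.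
right; move: H; case: s => /=; try done.
- move=> y z [[-> H]|[-> H]]; [left|right]; split => //; exact: (Hp _ _ H).
- move=> y [-> [H|H]]; split => //; [left|right]; exact: (Hp _ _ H).
- move=> y [-> [H|H]]; split => //; [left|right]; exact: (Hp _ _ H).
- move=> y [-> H]; split => //; exact: (Hp _ _ H).
- move=> y z [[-> H]|[-> H]]; [left|right]; split => //; exact: (Hp _ _ H).
- move=> f args H; exact: (dargs_mono Hr Hs H).
Qed.

Lemma Aapp_catL r pi s A B q w :
  Aapp r pi s (lcat A B) q w -> lcat (Aapp r pi s A q) B w.
Proof.
case=> [[-> [u [v [-> [Hu Hv]]]]]|H].
  by exists u, v; split => //; split => //; left.
move: H; case: s => /=; try done.
- move=> y z [[-> /lpre_catL [u [v [-> [Hu Hv]]]]]|[-> /lpre_catL [u [v [-> [Hu Hv]]]]]];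
  exists u, v; split => //; split => //; right; [left|right]; by split.
- move=> y [-> [/lpre_catL [u [v [-> [Hu Hv]]]]|/lpre_catL [u [v [-> [Hu Hv]]]]]];
  exists u, v; split => //; split => //; right; split => //; [left|right]; done.
- move=> y [-> [/lpre_catL [u [v [-> [Hu Hv]]]]|/lpre_catL [u [v [-> [Hu Hv]]]]]];
  exists u, v; split => //; split => //; right; split => //; [left|right]; done.
- move=> y [-> /lpre_catL [u [v [-> [Hu Hv]]]]];
  exists u, v; split => //; split => //; right; by split.
- move=> y z [[-> /lpre_catL [u [v [-> [Hu Hv]]]]]|[-> /lpre_catL [u [v [-> [Hu Hv]]]]]];
  exists u, v; split => //; split => //; right; [left|right]; by split.
- move=> f args /dargs_catL [u [v [-> [Hu Hv]]]].
  by exists u, v; split => //; split => //; right.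
Qed.

Lemma Aapp_catR r pi s A B q w :
  lcat (Aapp r pi s A q) B w -> Aapp r pi s (lcat A B) q w.
Proof.
case=> [u [v [-> [[[-> Hu]|Hu] Hv]]]].
  by left; split => //; exists u, v.
right; move: Hu; case: s => /=; try done.
- move=> y z [[-> Hu]|[-> Hu]]; [left|right]; split => //; apply: lpre_catR; by exists u, v.
- move=> y [-> [Hu|Hu]]; split => //; [left|right]; apply: lpre_catR; by exists u, v.
- move=> y [-> [Hu|Hu]]; split => //; [left|right]; apply: lpre_catR; by exists u, v.
- move=> y [-> Hu]; split => //; apply: lpre_catR; by exists u, v.
- move=> y z [[-> Hu]|[-> Hu]]; [left|right]; split => //; apply: lpre_catR; by exists u, v.
- move=> f args Hu; apply: dargs_catR; by exists u, v.
Qed.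

Lemma Dex_mono r1 r2 : NLsub r1 r2 -> forall e s1 s2, lsub s1 s2 ->
  forall q, lsub (Dex r1 e s1 q) (Dex r2 e s2 q).
Proof.
move=> Hr; elim=> [l y e1 IH1 e2 IH2|l x sl s e IH|l y] s1 s2 Hs q w /=.
- case=> [[H|H]|[[-> H]|[-> H]]].
  + by left; left; apply: IH1 H.
  + by left; right; apply: IH2 H.
  + by right; left; split => //; apply: (@lpre_mono S2 s1 s2 Hs).
  + by right; right; split => //; apply: Hs.
- case=> [H|[H|[-> H]]].
  + left; apply: (Aapp_mono Hr _ H) => v [p Hp Hv]; exists p => //; exact: IH Hv.
  + by right; left; apply: IH H.
  + by right; right; split => //; apply: Hs.
- case=> [[-> H]|[-> H]]; [left|right]; split => //; exact: Hs.
Qed.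

Lemma Dex_catL r A B : forall e q w, Dex r e (lcat A B) q w -> lcat (Dex r e A q) B w.
Proof.
elim=> [l y e1 IH1 e2 IH2|l x sl s e IH|l y] q w /=.
- case=> [[H|H]|[[-> H]|[-> H]]].
  + have [u [v [-> [Hu Hv]]]] := IH1 _ _ H; by exists u, v; split => //; split => //; left; left.
  + have [u [v [-> [Hu Hv]]]] := IH2 _ _ H; by exists u, v; split => //; split => //; left; right.
  + have [u [v [-> [Hu Hv]]]] := lpre_catL H; by exists u, v; split => //; split => //; right; left.
  + have [u [v [-> [Hu Hv]]]] := H; by exists u, v; split => //; split => //; right; right.
- case=> [H|[H|[-> H]]].
  + have H' : Aapp r sl s (lcat (occ_union x e (Dex r e A)) B) q w.
      have Hsub : lsub (occ_union x e (Dex r e (lcat A B))) (lcat (occ_union x e (Dex r e A)) B).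
        move=> v [p Hp /IH [a [b [-> [Ha Hb]]]]]; exists a, b; split => //; split => //; by exists p.
      have Hr0 : NLsub r r by move=> f0 i0 w0 Hw0.
      exact: (Aapp_mono Hr0 Hsub H).
    have [u [v [-> [Hu Hv]]]] := Aapp_catL H'; by exists u, v; split => //; split => //; left.
  + have [u [v [-> [Hu Hv]]]] := IH _ _ H; by exists u, v; split => //; split => //; right; left.
  + have [u [v [-> [Hu Hv]]]] := H; by exists u, v; split => //; split => //; right; right.
- case=> [[-> [u [v [-> [Hu Hv]]]]]|[-> [u [v [-> [Hu Hv]]]]]];
    exists u, v; split => //; split => //; [left|right]; done.
Qed.

Lemma Dex_catR r A B : forall e q w, lcat (Dex r e A q) B w -> Dex r e (lcat A B) q w.
Proof.
elim=> [l y e1 IH1 e2 IH2|l x sl s e IH|l y] q w /=;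
  case=> [u [v [-> [Hu Hv]]]].
- case: Hu => [[H|H]|[[-> H]|[-> H]]].
  + by left; left; apply: IH1; exists u, v.
  + by left; right; apply: IH2; exists u, v.
  + by right; left; split => //; apply: lpre_catR; exists u, v.
  + by right; right; split => //; exists u, v.
- case: Hu => [H|[H|[-> H]]].
  + left.
    have Hsub : lsub (lcat (occ_union x e (Dex r e A)) B) (occ_union x e (Dex r e (lcat A B))).
      move=> z [a [b [-> [[p Hp Ha] Hb]]]]; exists p => //; apply: IH; by exists a, b.
    have Hr0 : NLsub r r by move=> f0 i0 w0 Hw0.
    have H2 : Aapp r sl s (lcat (occ_union x e (Dex r e A)) B) q (u ++ v).
      apply: Aapp_catR; by exists u, v.
    exact: (Aapp_mono Hr0 Hsub H2).
  + by right; left; apply: IH; exists u, v.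
  + by right; right; split => //; exists u, v.
- case: Hu => [[-> H]|[-> H]]; [left|right]; split => //; by exists u, v.
Qed.

Lemma Lsol_sol P crit : is_solution P crit (Lsol P crit).
Proof.
have Hsub : forall rho, is_solution P crit rho -> forall n, lsub (Lsol P crit n) (rho n).
  by move=> rho Hr n w Hw; apply: Hw.
split.
- move=> d Hd i Hi p Hp w H rho Hrho.
  have Hn : NLsub (Lsol P crit) rho by move=> f j; apply: Hsub.
  have Hl : lsub leps leps by [].
  case: Hrho => [H1 _ _ _]; apply: (H1 d Hd i Hi p Hp).
  exact: (Dex_mono Hn Hl H).
- by move=> w Hw rho [_ H2 _ _]; apply: H2.
- move=> g e Hge f sl Hc w Hw rho Hrho.
  case: (Hrho) => [_ _ H3 _]; apply: (H3 g e Hge f sl Hc); exact: Hw.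
- move=> g e Hge p w H rho Hrho.
  have Hn : NLsub (Lsol P crit) rho by move=> f j; apply: Hsub.
  case: (Hrho) => [_ _ _ H4]; apply: (H4 g e Hge p).
  exact: (Dex_mono Hn (Hsub rho Hrho (NSig g)) H).
Qed.

Theorem mainTheorem2 (P : program) (Hwf : wf_program P) (crit : lang)
  (Hcrit : slicing_criterion crit) (pi : nat) (Hpi : pi \in prog_expr_labels P) :
  forall w, Lsol P crit (ND pi) w <-> lcat (Lsol P leps (ND pi)) crit w.
Proof.
move=> w; split.
- move=> Hw.
  pose rho2 : valuation := fun n => match n with
    | NL _ _ => Lsol P leps n
    | NSig g => lcat (Lsol P leps (NSig g)) crit
    | ND p => lcat (Lsol P leps (ND p)) crit end.
  apply: (Hw rho2).
  have [E1 E2 E3 E4] := Lsol_sol P leps.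
  have Hn : NLsub rho2 (Lsol P leps) by move=> f i w0 Hw0.
  have Hl : lsub leps leps by [].
  have Hc : lsub crit crit by [].
  split.
  + move=> d Hd i Hi p Hp w0 H; apply: (E1 d Hd i Hi p Hp).
    exact: (Dex_mono Hn Hl H).
  + move=> w0 H; exists [::], w0; split => //; split => //; exact: E2.
  + move=> g e Hge f sl Hcl; apply: lcat_mono => //; exact: (E3 g e Hge f sl Hcl).
  + move=> g e Hge p w0 H.
    have [u [v [-> [Hu Hv]]]] := Dex_catL H.
    exists u, v; split => //; split => //.
    apply: (E4 g e Hge p).
    have Hl2 : lsub (Lsol P leps (NSig g)) (Lsol P leps (NSig g)) by [].
    exact: (Dex_mono Hn Hl2 Hu).
- case=> [u [v [-> [Hu Hv]]]] rho Hrho.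
  pose rho1 : valuation := fun n => match n with
    | NL _ _ => rho n
    | NSig g => fun a => forall b, crit b -> rho (NSig g) (a ++ b)
    | ND p => fun a => forall b, crit b -> rho (ND p) (a ++ b) end.
  have [H1 H2 H3 H4] := Hrho.
  have Hn : NLsub rho1 rho by move=> f i w0 Hw0.
  have Hl : lsub leps leps by [].
  suff Hs : is_solution P leps rho1 by exact: (Hu rho1 Hs v Hv).
  split.
  + move=> d Hd i Hi p Hp w0 H; apply: (H1 d Hd i Hi p Hp).
    exact: (Dex_mono Hn Hl H).
  + by move=> w0 -> b Hb; apply: H2.
  + move=> g e Hge f sl Hcl a Ha b Hb; apply: (H3 g e Hge f sl Hcl); exact: Ha.
  + move=> g e Hge p a Ha b Hb; apply: (H4 g e Hge p).
    have Hq : lsub (lcat (rho1 (NSig g)) crit) (rho (NSig g)).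
      by move=> z [a' [b' [-> [Ha' Hb']]]]; apply: Ha'.
    have Hd : Dex rho1 e (lcat (rho1 (NSig g)) crit) p (a ++ b).
      apply: Dex_catR; by exists a, b.
    exact: (Dex_mono Hn Hq Hd).
Qed.
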